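(* Let $p\ge 1$, let $\alpha\in[0,1]$ and let $g\in\mathbb{R}^p$ with $g\neq 0$. Let $m$ be an index with $|g_m|=\max_d|g_d|$, and let $I_{12}$ be the $p\times p$ diagonal matrix with $(I_{12})_{dd}=1$ if $|g_d|\ge \alpha|g_m|$ and $(I_{12})_{dd}=0$ otherwise. Let $p_1:=\sum_{d=1}^p (I_{12})_{dd}$ (so $1\le p_1\le p$), let $$\Delta x_{12}:=-I_{12}g\left(\frac{\alpha}{\|I_{12}g\|_1}+\frac{1-\alpha}{\|I_{12}g\|_2}\right),$$ and let $h_\alpha(v):=\alpha\|v\|_1+(1-\alpha)\|v\|_2^2$. Then $$0.61<1-\alpha(1-\alpha)(2-\alpha)\left(1-\frac 1{p_1}\right)\le h_\alpha(\Delta x_{12})\le 1+\alpha(1-\alpha)(\sqrt{p_1}-1)\le 1+\frac{\sqrt{p_1}-1}{4}.$$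
   Context: $\Delta x_{12}$ is the (non-scaled) elastic gradient descent update direction; $p_1$ is the number of coordinates updated. *)

(* Defs.v *)
From mathcomp Require Import all_boot all_order all_algebra.
From mathcomp Require Import reals.
Set Implicit Arguments. Unset Strict Implicit. Unset Printing Implicit Defensive.
Import Order.TTheory GRing.Theory Num.Theory.
Local Open Scope ring_scope.

Definition norm1 {R : realType} {p : nat} (v : 'cV[R]_p) : R :=
  \sum_(i < p) `|v i 0|.
Definition norm2 {R : realType} {p : nat} (v : 'cV[R]_p) : R :=
  Num.sqrt (\sum_(i < p) (v i 0) ^+ 2).

Definition I12 {R : realType} {p : nat} (alpha : R) (g : 'cV[R]_p) (m : 'I_p)
  : 'M[R]_p :=
  diag_mx (\row_(d < p) (if alpha * `|g m 0| <= `|g d 0| then 1 else 0)).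

Definition p1 {R : realType} {p : nat} (alpha : R) (g : 'cV[R]_p) (m : 'I_p) : R :=
  \sum_(d < p) I12 alpha g m d d.

Definition dx12 {R : realType} {p : nat} (alpha : R) (g : 'cV[R]_p) (m : 'I_p)
  : 'cV[R]_p :=
  let v := I12 alpha g m *m g in
  - ((alpha / norm1 v + (1 - alpha) / norm2 v) *: v).

Definition h_alpha {R : realType} {p : nat} (alpha : R) (v : 'cV[R]_p) : R :=
  alpha * norm1 v + (1 - alpha) * (norm2 v) ^+ 2.

(* Main.v *)
Require Import Defs.
From mathcomp Require Import all_boot all_order all_algebra.
From mathcomp Require Import reals.
Import Order.TTheory GRing.Theory Num.Theory.
From mathcomp Require Import ring lra.
Import Order.TTheory GRing.Theory Num.Theory.
Local Open Scope ring_scope.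

Lemma arith_low (R : realType) (al t r sq q w : R) :
  0 <= al -> al <= 1 -> t * r = 1 -> 1 <= t -> t <= sq -> sq ^+ 2 = q ->
  1 <= sq -> q * w = 1 -> 0 < r ->
  1 - al * (1 - al) * (2 - al) * (1 - w) <=
  al * (al + (1 - al) * t) + (1 - al) * (al * r + (1 - al)) ^+ 2.
Proof.
move=> a0 a1 tr t1 tsq sq2 sq1 qw r0.
have r1 : r <= 1 by nra.
have qt : t <= q by nra.
have q0 : 0 < q by nra.
have w0 : 0 < w by nra.
have wr : w <= r.
  have : w * (t * r) <= w * (q * r) by apply: ler_wpM2l; [lra| apply: ler_wpM2r; lra].
  by rewrite tr mulr1 mulrA (mulrC w q) qw mul1r.
have key : (t - 1) * (r * (al * r + 2 - al) - 1) <= (2 - al) * (1 - w).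
  have -> : (t - 1) * (r * (al * r + 2 - al) - 1) =
            (1 - r) * (al * r + 2 - al) - (t - 1).
    have -> : (t - 1) * (r * (al * r + 2 - al) - 1) =
       (t * r) * (al * r + 2 - al) - r * (al * r + 2 - al) - (t - 1) by ring.
    rewrite tr; ring.
  have h1 : (1 - r) * (al * r) <= (1 - r) * t.
    apply: ler_wpM2l; first lra.
    have : al * r <= 1 * r by apply: ler_wpM2r; lra.
    lra.
  nra.
have id : al * (al + (1 - al) * t) + (1 - al) * (al * r + (1 - al)) ^+ 2 - 1
   + al * (1 - al) * (t - 1) * (r * (al * r + 2 - al) - 1)
   = al * (1 - al) * (al * r + 2 - al) * (t * r - 1) by ring.
rewrite tr subrr mulr0 in id.
have : 0 <= al * (1 - al) by nra.
nra.
Qed.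

Lemma arith_up (R : realType) (al t r sq : R) :
  0 <= al -> al <= 1 -> t * r = 1 -> 1 <= t -> t <= sq -> 0 < r ->
  al * (al + (1 - al) * t) + (1 - al) * (al * r + (1 - al)) ^+ 2
  <= 1 + al * (1 - al) * (sq - 1).
Proof.
move=> a0 a1 tr t1 tsq r0.
have r1 : r <= 1 by nra.
have h : (al * r + (1 - al)) ^+ 2 <= 1.
  have : 0 <= al * r + (1 - al) <= 1 by apply/andP; split; nra.
  move=> /andP[]; nra.
have : 0 <= al * (1 - al) by nra.
nra.
Qed.

Lemma arith_a (R : realType) (al w : R) :
  0 <= al -> al <= 1 -> 0 <= w <= 1 ->
  61 / 100 < 1 - al * (1 - al) * (2 - al) * (1 - w).
Proof.
move=> a0 a1 /andP[w0 w1].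
have hint : 0 <= ((1 - al) - 577/1000) ^+ 2 * ((1 - al) + 1154/1000).
  apply: mulr_ge0; [exact: sqr_ge0| lra].
have P0 : 0 <= al * (1 - al) * (2 - al) by apply: mulr_ge0; nra.
nra.
Qed.

Lemma arith_d (R : realType) (al sq : R) :
  0 <= al -> al <= 1 -> 1 <= sq ->
  1 + al * (1 - al) * (sq - 1) <= 1 + (sq - 1) / 4.
Proof.
move=> a0 a1 s1.
have : 0 <= (al - 1/2) ^+ 2 * (sq - 1) by apply: mulr_ge0; [exact: sqr_ge0| lra].
nra.
Qed.

Section S.
Variables (R : realType) (p : nat) (alpha : R) (g : 'cV[R]_p) (m : 'I_p).
Let e (i : 'I_p) : R := if alpha * `|g m 0| <= `|g i 0| then 1 else 0.

Lemma I12E i : I12 alpha g m i i = e i.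
Proof. by rewrite /I12 !mxE eqxx mulr1n. Qed.

Lemma vE i : (I12 alpha g m *m g) i 0 = e i * g i 0.
Proof. by rewrite /I12 mul_diag_mx !mxE. Qed.

Lemma p1E : p1 alpha g m = \sum_i e i.
Proof. by apply: eq_bigr => i _; rewrite I12E. Qed.
End S.

Theorem theorem2 (R : realType) (p : nat) (hp : (1 <= p)%N)
  (alpha : R) (ha0 : 0 <= alpha) (ha1 : alpha <= 1)
  (g : 'cV[R]_p) (hg : g != 0)
  (m : 'I_p) (hm : forall d : 'I_p, `|g d 0| <= `|g m 0|) :
  let q := p1 alpha g m in
  let h := h_alpha alpha (dx12 alpha g m) in
  61 / 100 < 1 - alpha * (1 - alpha) * (2 - alpha) * (1 - q^-1)
  /\ 1 - alpha * (1 - alpha) * (2 - alpha) * (1 - q^-1) <= h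
  /\ h <= 1 + alpha * (1 - alpha) * (Num.sqrt q - 1)
  /\ 1 + alpha * (1 - alpha) * (Num.sqrt q - 1) <= 1 + (Num.sqrt q - 1) / 4.
Proof.
move=> q h.
pose e (i : 'I_p) : R := if alpha * `|g m 0| <= `|g i 0| then 1 else 0.
have qE : q = \sum_i e i by rewrite /q p1E.
have e01 : forall i, e i = 0 \/ e i = 1 by move=> i; rewrite /e; case: ifP; auto.
have e0 : forall i, 0 <= e i by move=> i; case: (e01 i) => ->; lra.
have em : e m = 1.
  rewrite /e ifT //; have := normr_ge0 (g m 0); nra.
have gm0 : g m 0 != 0.
  apply/negP => /eqP gm; move/negP: hg; apply; apply/eqP/matrixP => i j.
  rewrite ord1 mxE; apply/eqP; rewrite -normr_eq0 eq_le normr_ge0 andbT.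
  by have := hm i; rewrite gm normr0.
set v := I12 alpha g m *m g.
have vi : forall i, v i 0 = e i * g i 0 by move=> i; rewrite /v vE.
have vm : v m 0 = g m 0 by rewrite vi em mul1r.
set a := norm1 v.
set B := \sum_(i < p) (v i 0) ^+ 2.
have Bn : B = \sum_(i < p) `|v i 0| ^+ 2 by apply: eq_bigr => i _; rewrite real_normK // num_real.
have q1 : 1 <= q.
  rewrite qE (bigD1 m) //= em lerDl; apply: sumr_ge0 => i _; exact: e0.
have B0 : 0 < B.
  rewrite /B (bigD1 m) //= vm.
  have s0 : 0 <= \sum_(i < p | i != m) v i 0 ^+ 2 by apply: sumr_ge0 => i _; exact: sqr_ge0.
  have s1 : 0 < g m 0 ^+ 2 by rewrite lt_def sqrf_eq0 gm0 sqr_ge0.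
  lra.
have a0 : 0 <= a by apply: sumr_ge0 => i _.
set b := Num.sqrt B.
have b2 : b ^+ 2 = B by rewrite sqr_sqrtr // ltW.
have b0 : 0 < b by rewrite sqrtr_gt0.
have Ba : B <= a ^+ 2.
  rewrite Bn expr2 /a mulr_sumr; apply: ler_sum => i _.
  rewrite expr2; apply: ler_wpM2r => //.
  rewrite [X in _ <= X](bigD1 i) //= lerDl; exact: sumr_ge0.
have ba : b <= a by nra.
set sq := Num.sqrt q.
have sq2 : sq ^+ 2 = q by rewrite sqr_sqrtr //; lra.
have sq0 : 0 <= sq by exact: sqrtr_ge0.
have sq1 : 1 <= sq by nra.
have asq : a <= sq * b.
  have H : 2 * b * sq * a <= \sum_i (e i * b ^+ 2 + q * `|v i 0| ^+ 2).
    rewrite /a /norm1 mulr_sumr.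
    apply: ler_sum => i _; rewrite vi normrM.
    case: (e01 i) => ->; first by rewrite normr0 !(mul0r, mulr0, add0r, expr0n) /=; lra.
    rewrite normr1 !mul1r -sq2.
    have := sqr_ge0 (b - sq * `|g i 0|); nra.
  rewrite big_split /= -mulr_suml -mulr_sumr -Bn -qE b2 in H.
  have H2 : sq * a <= sq * (sq * b).
    rewrite mulrA -expr2 sq2; nra.
  by rewrite ler_pM2l // in H2; lra.
set c := alpha / a + (1 - alpha) / b.
have aP : 0 < a by lra.
have c0 : 0 <= c by apply: addr_ge0; apply: divr_ge0; lra.
have hE : h = alpha * (c * a) + (1 - alpha) * (c * b) ^+ 2.
  rewrite /h /h_alpha /dx12 -/v; congr (_ + _).
    congr (_ * _); rewrite /norm1 /a /norm1 mulr_sumr; apply: eq_bigr => i _.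
    by rewrite !mxE normrN normrM ger0_norm.
  congr (_ * _); rewrite /norm2 sqr_sqrtr; last by apply: sumr_ge0 => i _; exact: sqr_ge0.
  rewrite exprMn b2 /B mulr_sumr; apply: eq_bigr => i _.
  by rewrite !mxE sqrrN exprMn.
set t := a / b. set r := b / a.
have an : a != 0 by rewrite gt_eqF.
have bn : b != 0 by rewrite gt_eqF.
have tr : t * r = 1 by rewrite /t /r; field; rewrite an bn.
have ca : c * a = alpha + (1 - alpha) * t.
  by rewrite /c /t; field; rewrite an bn.
have cb : c * b = alpha * r + (1 - alpha).
  by rewrite /c /r; field; rewrite an bn.
have t1 : 1 <= t by rewrite /t ler_pdivlMr // mul1r.
have tsq : t <= sq by rewrite /t ler_pdivrMr.
have r0 : 0 < r by rewrite /r divr_gt0.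
rewrite hE ca cb -/sq.
have qw : q * q^-1 = 1 by rewrite divff // gt_eqF //; lra.
have w01 : 0 <= q^-1 <= 1.
  have w0 : 0 <= q^-1 by rewrite invr_ge0; lra.
  apply/andP; split => //; nra.
split; first exact: arith_a.
split; first exact: (@arith_low R alpha t r sq q q^-1 ha0 ha1 tr t1 tsq sq2 sq1 qw r0).
split; first exact: (@arith_up R alpha t r sq ha0 ha1 tr t1 tsq r0).
exact: arith_d.
Qed.
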